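(* Let $n$ be a positive integer and $r$ an odd prime. Let $R=R_{n,r}$ be an extraspecial group of order $r^{2n+1}$ and exponent $r$, let $A=A_{n,r}\leqslant\operatorname{Aut}(R)$ be a subgroup isomorphic to $Sp_{2n}(r)$ which centralizes $Z(R)$, and let $X=X_{n,r}=RA$ be the natural semidirect product. Let $p$ be a prime with $p\equiv 1\pmod r$, let $V=V_{n,r}$ be a faithful irreducible $\mathbb{F}_pX$-module of dimension $r^n$, and let $G=G_{n,r}=VX$ be the natural semidirect product. Then (1) $F(G)=V$; (2) $F^*(G/V)=F(G/V)=VR/V\cong R$; (3) $G/VR\cong A\cong Sp_{2n}(r)$.
   Context: $F(H)$ denotes the Fitting subgroup of a finite group $H$ and $F^*(H)=F(H)E(H)$ its generalized Fitting subgroup, where $E(H)$ is the subgroup generated by all subnormal quasisimple subgroups of $H$. Such subgroups $A$ and modules $V$ exist (the stated properties hold for any such choices). *)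

(* Defs.v *)
From mathcomp Require Import all_boot all_order all_algebra all_fingroup all_solvable.
Set Implicit Arguments. Unset Strict Implicit. Unset Printing Implicit Defensive.
Import GRing.Theory.
Local Open Scope group_scope.

Definition quasisimple (gT : finGroupType) (H : {set gT}) : bool :=
  (H^`(1) == H) && simple (H / 'Z(H)).

Definition layer (gT : finGroupType) (H : {set gT}) : {set gT} :=
  << \bigcup_(K : {group gT} | (K <|<| H) && quasisimple K) K >>.

Definition genFitting (gT : finGroupType) (H : {set gT}) : {set gT} :=
  'F(H) * layer H.

(* Standard symplectic Gram matrix J on F^(2n) (size written (n.*2).-1.+1,
   which equals 2n for n > 0): J_{i,i+n} = 1, J_{i+n,i} = -1, else 0. *)
Definition sympJ (F : pzRingType) (n : nat) : 'M[F]_((n.*2).-1.+1) :=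
  \matrix_(i, j) (if (j : nat) == (i + n)%N then 1%R
                  else if (i : nat) == (j + n)%N then (-1)%R else 0%R).

Definition Sp (n r : nat) : {set {'GL_(n.*2)['F_r]}} :=
  [set M : {'GL_(n.*2)['F_r]} |
     (GLval M *m sympJ 'F_r n *m (GLval M)^T == sympJ 'F_r n)%R].

(* Main.v *)
Require Import Defs.
From mathcomp Require Import all_boot all_order all_algebra all_fingroup all_solvable.
From mathcomp Require Import all_field all_character zify.
Set Implicit Arguments. Unset Strict Implicit. Unset Printing Implicit Defensive.
Import GRing.Theory.

Section SpLemma.
Variables (n r : nat).
Hypotheses (n_gt0 : (0 < n)%N) (pr_r : prime r) (odd_r : odd r).
Local Notation F := 'F_r.
Local Notation d := (n.*2).-1.+1.
Local Notation J := (sympJ 'F_r n).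
Local Open Scope ring_scope.

Lemma d_eq : d = n.*2. Proof. by rewrite prednK // double_gt0. Qed.

Lemma ltd (k : 'I_d) : (k < n + n)%N.
Proof. rewrite addnn; exact: (leq_trans (ltn_ord k) (eq_leq d_eq)). Qed.

Lemma trJ : J^T = - J.
Proof.
apply/matrixP => i j; rewrite !mxE.
have hd := d_eq.
case: eqP => e1; case: eqP => e2 //=; try rewrite opprK //.
- exfalso; lia.
- by rewrite oppr0.
Qed.

Lemma two_neq0 : (2%:R : F) != 0.
Proof.
rewrite -(dvdn_pcharf (pchar_Fp pr_r)).
apply/negP => /(dvdn_leq (isT : (0 < 2)%N)); move: (prime_gt1 pr_r) odd_r.
by case: r => [|[|[|]]].
Qed.

Lemma vJv (v : 'rV[F]_d) : v *m J *m v^T = 0.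
Proof.
set s := v *m J *m v^T.
have Es : s^T = - s by rewrite /s !trmx_mul trmxK trJ mulNmx mulmxN mulmxA.
have h : s 0 0 = - s 0 0.
  have := congr1 (fun M : 'M_1 => M 0 0) Es; rewrite /= !mxE => <-; done.
rewrite [s]mx11_scalar.
suff -> : s 0 0 = 0 by apply/matrixP=> i j; rewrite !mxE mul0rn.
have : s 0 0 * 2%:R = 0 by rewrite mulrnAr mulr1 mulr2n {1}h addNr.
by move/eqP; rewrite mulf_eq0 (negbTE two_neq0) orbF => /eqP.
Qed.
Definition tvK (v : 'rV[F]_d) : 'M[F]_d := J *m v^T *m v.
Definition tv (v : 'rV[F]_d) : 'M[F]_d := 1%:M + tvK v.

Lemma tvKK v : tvK v *m tvK v = 0.
Proof.
rewrite /tvK.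
have -> : J *m v^T *m v *m (J *m v^T *m v) = J *m v^T *m (v *m J *m v^T) *m v by rewrite !mulmxA.
by rewrite vJv mulmx0 mul0mx.
Qed.

Lemma tv_unit v : tv v *m (1%:M - tvK v) = 1%:M.
Proof.
by rewrite /tv mulmxDl mul1mx mulmxBr mulmx1 tvKK subr0 addrNK.
Qed.

Lemma tv_sp v : tv v *m J *m (tv v)^T = J.
Proof.
have eKt : (tvK v)^T = - (v^T *m v *m J).
  by rewrite /tvK !trmx_mul trmxK trJ !mulmxN mulmxA.
rewrite /tv linearD /= trmx1 eKt mulmxDl mul1mx.
have e1 : J *m (v^T *m v *m J) = tvK v *m J by rewrite /tvK !mulmxA.
have e2 : tvK v *m J *m (v^T *m v *m J) = 0.
  rewrite /tvK.
  have -> : J *m v^T *m v *m J *m (v^T *m v *m J) = J *m v^T *m (v *m J *m v^T) *m v *m J by rewrite !mulmxA.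
  by rewrite vJv mulmx0 !mul0mx.
by rewrite mulmxDl !mulmxBr !mulmx1 e1 e2 subr0 subrK.
Qed.

Definition tvG v : {'GL_(n.*2)[F]} := Sub (tv v) (proj1 (mulmx1_unit (tv_unit v))).

Lemma tvGE v : GLval (tvG v) = tv v. Proof. by []. Qed.

Lemma tvG_Sp v : tvG v \in Sp n r.
Proof. by rewrite inE tvGE tv_sp. Qed.

Lemma col_nz (u : 'rV[F]_d) : u != 0 ->
  exists j : 'I_d, (u *m J *m (delta_mx 0 j : 'rV[F]_d)^T) 0 0 != 0.
Proof.
move=> /eqP unz.
have [i ui] : exists i, u 0 i != 0.
  case: (pickP (fun i => u 0 i != 0)) => [i ui|H]; first by exists i.
  exfalso; apply: unz; apply/matrixP => a b; rewrite ord1 mxE.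
  by move/negbFE/eqP: (H b).
have hd := d_eq.
have ltid := ltd i.
case: (ltnP i n) => hi.
  exists (inord (i + n)).
  have e : J *m (delta_mx 0 (inord (i + n) : 'I_d) : 'rV[F]_d)^T = delta_mx i 0.
    rewrite trmx_delta -colE; apply/matrixP => k l; rewrite !mxE ord1 eqxx andbT inordK; last by lia.
    have ltk := ltd k.
    have [->|ne] := eqVneq k i; first by rewrite eqxx.
    have ne' : (k : nat) <> i by move=> e; rewrite (ord_inj e) eqxx in ne.
    case: eqP => e1; first lia.
    by case: eqP => e2; [lia | ].
  by rewrite -mulmxA e -colE mxE.
exists (inord (i - n)).
have e : J *m (delta_mx 0 (inord (i - n) : 'I_d) : 'rV[F]_d)^T = - delta_mx i 0.
  rewrite trmx_delta -colE; apply/matrixP => k l; rewrite !mxE ord1 eqxx andbT inordK; last by lia.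
  have ltk := ltd k.
  have [->|ne] := eqVneq k i.
    case: eqP => e1; first lia.
    by case: eqP => e2; [rewrite /= | lia].
  have ne' : (k : nat) <> i by move=> e; rewrite (ord_inj e) eqxx in ne.
  case: eqP => e1; first lia.
  case: eqP => e2; [lia | by rewrite /= oppr0].
by rewrite -mulmxA e mulmxN -colE !mxE oppr_eq0.
Qed.

Lemma Sp_rcore (N : {group {'GL_(n.*2)[F]}}) :
  (r.-group N)%g -> Sp n r \subset 'N(N)%g -> N :=: 1%g.
Proof.
move=> rN nN.
pose rG := GLrepr F (n.*2).-1.
have : rfix_mx rG N != 0.
  exact: (rfix_pgroup_pchar (pchar_Fp pr_r) rG (ltn0Sn _) rN (subsetT _)).
move/rowV0Pn => [u /rfix_mxP uF unz].
pose S (w : 'rV[F]_d) := forall h, h \in N -> w *m GLval h = w.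
have Su : S u by move=> h hN; exact: uF h hN.
have SD w1 w2 : S w1 -> S w2 -> S (w1 + w2).
  by move=> S1 S2 h hN; rewrite mulmxDl S1 // S2.
have SN w : S w -> S (- w) by move=> S1 h hN; rewrite mulNmx S1.
have SZ a w : S w -> S (a *: w) by move=> S1 h hN; rewrite -scalemxAl S1.
have SJ w g : S w -> g \in Sp n r -> S (w *m GLval g).
  move=> Sw gSp h hN.
  have kN : (h ^ g^-1)%g \in N by rewrite -mem_conjg (normP (subsetP nN g gSp)).
  have e : (g * h = h ^ g^-1 * g)%g.
    by rewrite conjgE invgK !mulgA -(mulgA _ (g^-1)%g g) mulVg mulg1.
  by rewrite -mulmxA -GL_MxE e GL_MxE mulmxA (Sw _ kN).
pose c (v : 'rV[F]_d) := (u *m J *m v^T) 0 0.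
have key v : c v != 0 -> S v.
  move=> cv.
  have S1 := SJ u (tvG v) Su (tvG_Sp v).
  rewrite tvGE /tv mulmxDr mulmx1 /tvK in S1.
  have S2 : S (c v *: v).
    have -> : c v *: v = (u + u *m (J *m v^T *m v)) - u.
      rewrite addrC addKr !mulmxA [u *m J *m v^T]mx11_scalar mul_scalar_mx //.
    exact: SD S1 (SN _ Su).
  have -> : v = (c v)^-1 *: (c v *: v) by rewrite scalerA mulVf // scale1r.
  exact: SZ.
have [j cj] := col_nz unz.
have Sall w : S w.
  have Sv0 := key _ cj.
  case: (eqVneq (c w) 0) => cw; last exact: key.
  have Swv : S (w + delta_mx 0 j).
    apply: key; rewrite /c linearD /= mulmxDr mxE.
    move: cw; rewrite /c => ->; rewrite add0r; exact: cj.
  have -> : w = (w + delta_mx 0 j) + - delta_mx 0 j by rewrite addrK.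
  exact: SD Swv (SN _ Sv0).
apply/trivgP/subsetP => h hN; rewrite inE; apply/eqP/val_inj.
apply/row_matrixP => i; rewrite !rowE.
change (('e_i : 'rV[F]_d) *m GLval h = ('e_i : 'rV[F]_d) *m (1%:M : 'M[F]_d)); rewrite mulmx1.
exact: Sall _ h hN.
Qed.

End SpLemma.


Local Open Scope group_scope.

Lemma comp_lemma (gT : finGroupType) (K : {group gT}) : quasisimple K ->
  forall G N : {group gT}, K <|<| G -> N <| G -> K \subset N \/ K \subset 'C(N).
Proof.
case/andP=> /eqP dK sK G.
elim: {G}_.+1 {-2}G (ltnSn #|G|) => // m IH G leGm N snK nNG.
case: (subnormalEr snK) => [eKG | [H [snKH nHG ltHG]]].
  rewrite eKG in sK dK *.
  have nNG' := nNG; case/andP: nNG' => sNG nNG'.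
  have nZN : N \subset 'N('Z(G)) := subset_trans sNG (normal_norm (center_normal G)).
  case/simpleP: sK => _ /(_ [group of N / 'Z(G)]) [| e1 | e2].
  - exact: morphim_normal.
  - right; rewrite centsC; apply: subset_trans (subsetIr G _).
    by rewrite -quotient_sub1 // e1.
  - left; rewrite -dK; apply: der1_min => //.
    have sGNZ : G \subset N <*> 'Z(G).
      rewrite -(quotientSGK (normal_norm (center_normal G))) ?joing_subr //.
      rewrite -e2 /=; apply: quotientS; exact: joing_subl.
    have nNZ : 'Z(G) \subset 'N(N) := subset_trans (center_sub G) nNG'.
    apply: abelianS (quotient_abelian _ (center_abelian G)).
    by rewrite -(quotientYidl nNZ); apply: quotientS.
have sHG := proper_sub ltHG.
have ltH : #|H| < m := leq_trans (proper_card ltHG) leGm.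
have nNH : H :&: N <| H := normalGI sHG nNG.
case: (IH H ltH [group of H :&: N] snKH nNH) => [sKHN | cKHN].
  by left; apply: subset_trans sKHN (subsetIr _ _).
right; apply/commG1P.
have sKH := subnormal_sub snKH.
have sKN : [~: K, N] \subset H :&: N.
  apply: subset_trans (commgSS sKH (subxx _)) _.
  apply: commg_subI.
    by rewrite subsetI subxx (subset_trans sHG (normal_norm nNG)).
  by rewrite subsetI subxx (subset_trans (normal_sub nNG) (normal_norm nHG)).
have c1 : [~: K, N, K] = 1.
  apply/commG1P; apply: subset_trans sKN _; rewrite centsC; exact: cKHN.
have c2 : [~: N, K, K] = 1 by rewrite [[~: N, K]]commGC.
have := three_subgroup c1 c2.
have -> : [~: K, K] = K by exact: dK.
done.
Qed.

Lemma layer1 (gT : finGroupType) (Y Rb : {group gT}) :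
  Rb <| Y -> nilpotent Rb -> nilpotent 'C_Y(Rb) -> layer Y = 1.
Proof.
move=> nRY nilR nilC; rewrite /layer; apply/trivgP; rewrite gen_subG.
apply/bigcupsP => K /andP [snK qK].
have nilK : nilpotent K.
  case: (comp_lemma qK snK nRY) => s; first exact: nilpotentS s nilR.
  by apply: nilpotentS nilC; rewrite subsetI (subnormal_sub snK).
case/andP: qK => /eqP dK sK.
have [-> | ntK] := eqVneq K 1%G; first by rewrite sub1G.
have := sol_der1_proper (nilpotent_sol nilK) (subxx K) ntK.
by rewrite dK properxx.
Qed.

Section XFacts.
Variables (gT : finGroupType) (r : nat) (R A X : {group gT}).
Hypotheses (pr_r : prime r) (rR : r.-group R) (defX : R ><| A = X)
  (cAR : 'C_A(R) = 1).

Lemma nRX : R <| X. Proof. by case: (sdprod_context defX). Qed.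
Lemma sAX : A \subset X. Proof. by case: (sdprod_context defX). Qed.
Lemma eRA : R * A = X. Proof. by case: (sdprod_context defX). Qed.
Lemma tiRA : R :&: A = 1. Proof. by case: (sdprod_context defX). Qed.

Lemma nCX : 'C_X(R) <| X.
Proof.
have := subcent_normal X R.
by rewrite (setIidPl (normal_norm nRX)).
Qed.

Lemma CR_rgroup : r.-group 'C_X(R).
Proof.
set C := 'C_X(R).
have nCX' := nCX.
have sCX : C \subset X := normal_sub nCX'.
have nRC : C \subset 'N(R) := subset_trans sCX (normal_norm nRX).
have eRC : R <*> C = R * C :> {set gT} by rewrite norm_joinEr.
set RC := R <*> C.
have sRRC : R \subset RC by exact: joing_subl.
have sRCX : RC \subset X by rewrite join_subG normal_sub ?nRX.
have rB : r.-group (A :&: RC).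
  apply/pgroupP => q pq qB.
  have [b Bb ob] := Cauchy pq qB.
  case/setIP: Bb => bA bRC.
  have : b \in R * C by rewrite -eRC.
  case/mulsgP => x c xR cC ebc.
  have nCx : x \in 'N(C) := subsetP (normal_norm nCX') x (subsetP (normal_sub nRX) x xR).
  have nCc : c \in 'N(C) := subsetP (normal_norm nCX') c (subsetP sCX c cC).
  have nCb : b \in 'N(C) by rewrite ebc groupM.
  have e1 : coset C b = coset C x.
    by rewrite ebc morphM //= (coset_id cC) mulg1.
  have bC : b ^+ #[x] \in C.
    apply: coset_idr; first by rewrite groupX.
    by rewrite morphX //= -/C e1 -morphX //= expg_order morph1.
  have b1 : b ^+ #[x] = 1.
    have : b ^+ #[x] \in 'C_A(R).
      by rewrite inE groupX //=; case/setIP: bC.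
    by rewrite cAR => /set1gP.
  have : q %| #[x] by rewrite -ob order_dvdn b1.
  move/pnat_dvd/(_ (mem_p_elt rR xR)).
  by rewrite pnatE.
have eRB : R * (A :&: RC) = RC.
  by rewrite group_modl // eRA; apply/setIidPr.
have := pgroupM r R [group of A :&: RC]; rewrite rR rB eRB /= => rRC.
exact: pgroupS (joing_subr R C) rRC.
Qed.
Lemma FX : 'O_r(A) = 1 -> 'F(X) = R.
Proof.
move=> OrA.
have nFX : 'F(X) <| X := Fitting_normal X.
have sRF : R \subset 'F(X) := Fitting_max nRX (pgroup_nil rR).
have [_ eF cF _] := dprodP (nilpotent_pcoreC r (Fitting_nil X)).
have sRO : R \subset 'O_r('F(X)) := pcore_max rR (normalS sRF (normal_sub nFX) nRX).
have sOC : 'O_r^'('F(X)) \subset 'C_X(R).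
  rewrite subsetI (subset_trans (pcore_sub _ _) (normal_sub nFX)) /=.
  by rewrite centsC (subset_trans sRO) // centsC.
have O1 : 'O_r^'('F(X)) = 1.
  apply: card_le1_trivg; rewrite leq_eqVlt; apply/orP; left; apply/eqP.
  apply: (@pnat_1 r); first exact: pgroupS sOC CR_rgroup.
  exact: pcore_pgroup.
have rF : r.-group 'F(X).
  by rewrite -eF O1 mulg1 pcore_pgroup.
have sAF : A :&: 'F(X) \subset 'O_r(A).
  apply: pcore_max; first exact: pgroupS (subsetIr _ _) rF.
  exact: normalGI sAX nFX.
rewrite OrA in sAF.
have := group_modl A sRF; rewrite eRA (setIidPr (normal_sub nFX)) => <-.
by rewrite (trivgP sAF) mulg1.
Qed.
End XFacts.


Unset Implicit Arguments.

Theorem proposition2 (gT : finGroupType) (n r p : nat)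
  (R A X V G : {group gT}) :
  (0 < n)%N -> prime r -> odd r ->
  (* R extraspecial of order r^(2n+1) and exponent r *)
  extraspecial R -> #|R| = (r ^ (n.*2).+1)%N -> exponent R = r ->
  (* A acts faithfully on R (so A <= Aut(R)), A centralizes Z(R), A ~ Sp_{2n}(r) *)
  'C_A(R) = 1 -> A \subset 'C('Z(R)) -> A \isog Sp n r ->
  (* X = R A, the natural semidirect product *)
  R ><| A = X ->
  (* p prime, p = 1 mod r *)
  prime p -> p = 1 %[mod r] ->
  (* V a faithful irreducible F_p X-module of dimension r^n *)
  p.-abelem V -> #|V| = (p ^ (r ^ n))%N -> 'C_X(V) = 1 -> minnormal V X ->
  (* G = V X, the natural semidirect product *)
  V ><| X = G ->
  [/\ 'F(G) = V,
      genFitting (G / V) = 'F(G / V)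
        /\ 'F(G / V) = (V <*> R) / V /\ (V <*> R) / V \isog R
    & G / (V <*> R) \isog A /\ A \isog Sp n r].
Proof.
move=> n_gt0 pr_r odd_r _ cardR _ cAR _ AiSp defX pr_p pmod abV _ cXV _ defG.
have rR : r.-group R by rewrite /pgroup cardR pnatX pnat_id.
have OrA : 'O_r(A) = 1.
  have [f /eqP isoF] := isog_isom AiSp.
  set N := f @* 'O_r(A).
  have rN : r.-group N := morphim_pgroup f (pcore_pgroup _ _).
  have nN : Sp n r \subset 'N(N).
    apply/subsetP => g gSp; case: (eqVneq g 1) => [-> | ng1]; first exact: group1.
    have : g \in (Sp n r)^# by rewrite in_setD1 ng1 gSp.
    rewrite -isoF => /imsetP [a /setD1P [_ aA] ->].
    apply: (subsetP (morphim_norms f (normal_norm (pcore_normal r A)))).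
    exact: mem_morphim.
  have N1 := Sp_rcore n_gt0 pr_r odd_r (N:=[group of N]) rN nN.
  apply/trivgP/subsetP => a aO; apply/set1gP; case: (eqVneq a 1) => // na; exfalso.
  have aA : a \in A := subsetP (pcore_sub _ _) a aO.
  have : f a \in (Sp n r)^# by rewrite -isoF; apply: imset_f; rewrite in_setD1 na aA.
  have : f a \in N by exact: mem_morphim.
  have N1' : N = 1 by exact: N1.
  by rewrite N1' => /set1gP ->; rewrite in_setD1 eqxx.
have FXR := FX rR defX cAR OrA.
have rC := CR_rgroup rR defX cAR.
have nRX' := nRX defX.
have sRX := normal_sub nRX'.
have sAX' := sAX defX.
have [nVG sXG eVX nVX tiVX] := sdprod_context defG.
have pV := abelem_pgroup abV.
have aV := abelem_abelian abV.
have npr : p != r.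
  apply/eqP => epr; move: pmod; rewrite epr modnn modn_small ?prime_gt1 //.
have nRV : R \subset 'N(V) := subset_trans sRX nVX.
have FG : 'F(G) = V.
  have nFG : 'F(G) <| G := Fitting_normal G.
  have sVF : V \subset 'F(G) := Fitting_max nVG (abelian_nil aV).
  have CGV : 'C_G(V) = V.
    have := group_modl X (aV : V \subset 'C(V)).
    by rewrite eVX -/('C_X(V)) cXV mulg1 => <-.
  have [_ eF cF _] := dprodP (nilpotent_pcoreC p (Fitting_nil G)).
  have sVO : V \subset 'O_p('F(G)) := pcore_max pV (normalS sVF (normal_sub nFG) nVG).
  have sOV : 'O_p^'('F(G)) \subset V.
    rewrite -CGV subsetI (subset_trans (pcore_sub _ _) (normal_sub nFG)) /=.
    by rewrite centsC (subset_trans sVO) // centsC.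
  have O1 : 'O_p^'('F(G)) = 1.
    apply: card_le1_trivg; rewrite leq_eqVlt; apply/orP; left; apply/eqP.
    apply: (@pnat_1 p); first exact: pgroupS sOV pV.
    exact: pcore_pgroup.
  have pF : p.-group 'F(G) by rewrite -eF O1 mulg1 pcore_pgroup.
  have sXF : X :&: 'F(G) \subset 'O_p(X).
    apply: pcore_max; first exact: pgroupS (subsetIr _ _) pF.
    exact: normalGI sXG nFG.
  have sXF1 : X :&: 'F(G) \subset [1].
    apply/subsetP => x xXF.
    have xO := subsetP sXF x xXF.
    have sOF : 'O_p(X) \subset 'F(X).
      exact: Fitting_max (pcore_normal _ _) (pgroup_nil (pcore_pgroup p X)).
    have xR : x \in R by rewrite -FXR; exact: subsetP sOF _ xO.
    have rx : r.-nat #[x] := mem_p_elt rR xR.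
    have px : p.-nat #[x] := mem_p_elt (pcore_pgroup _ _) xO.
    have p'x : p^'.-nat #[x].
      apply: sub_in_pnat rx => q _; rewrite !inE => /eqP ->.
      by rewrite eq_sym.
    by rewrite inE -order_eq1 (pnat_1 px p'x).
  have := group_modl X sVF; rewrite eVX (setIidPr (normal_sub nFG)) => <-.
  by rewrite (trivgP sXF1) mulg1.
have isoq := quotient_isom nVX tiVX.
have injq : 'injm (restrm nVX (coset V)) := isom_inj isoq.
have qE (B : {group gT}) : B \subset X -> restrm nVX (coset V) @* B = B / V.
  by move=> sBX; rewrite morphim_restrm (setIidPr sBX).
have eGV : G / V = X / V by rewrite -eVX quotientMidl.
have eRV : (V <*> R) / V = R / V by rewrite quotientYidl.
have FGV : 'F(G / V) = R / V.
  rewrite eGV -(qE X) // -injm_Fitting // FXR qE //.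
have CGV : 'C_(G / V)(R / V) = restrm nVX (coset V) @* 'C_X(R).
  by rewrite injm_subcent // !qE // eGV.
have LGV : layer (G / V) = 1.
  apply: (layer1 (Rb := [group of R / V])).
  - by rewrite /= eGV; exact: quotient_normal.
  - exact: morphim_nil (pgroup_nil rR).
  - rewrite /= CGV; apply: morphim_nil; exact: pgroup_nil rC.
split => //.
  split; first by rewrite /genFitting LGV mulg1.
  split; first by rewrite FGV eRV.
  rewrite eRV isog_sym; apply: quotient_isog => //.
  by apply/trivgP; rewrite -tiVX setIS.
split => //.
have nVRA : A \subset 'N(V <*> R).
  by rewrite normsY // ?(subset_trans sAX' nVX) ?(subset_trans sAX' (normal_norm nRX')).
have eG : (V <*> R) * A = G.
  by rewrite norm_joinEr // -mulgA (eRA defX) eVX.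
have tiVRA : (V <*> R) :&: A = 1.
  have eVRX : X :&: (V <*> R) = R.
    by rewrite norm_joinEr // -group_modr // setIC tiVX mul1g.
  apply/trivgP; apply: (@subset_trans _ _ ((X :&: (V <*> R)) :&: A)).
    by apply/subsetP => x /setIP [xVR xA]; rewrite !inE xVR xA (subsetP sAX' x xA).
  by rewrite eVRX (tiRA defX).
by rewrite -eG quotientMidl isog_sym quotient_isog.
Qed.
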